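(* Let $(G,\mathcal{C})$ be a CER graph. If $\{v,w\}\in\tilde E$ and $c(v,w)=k\in F_i$ for some $i\in[r]$, then $c(v)=c(w)=i$.
   Context: $G=(V,E)$ finite simple undirected graph, $V=[p]$; coloring: vertex color classes $V_1,\dots,V_r$, edge color classes $E_{r+1},\dots,E_{r+R}$ partitioning $E$. $\tilde E=E\cup\{\{v\}:v\in V\}$, $E_i=\{\{v\}:v\in V_i\}$; $c(v,w)=k$ iff $\{v,w\}\in E_k$; $c(v)=c(v,v)$. $F_i=\{c(v,w):\{v,w\}\in\tilde E,\ c(v)=c(w)=i\}$. For an ordering $(V_{\eta_1},\dots,V_{\eta_r})$: $\pi(v)=i$ iff $v\in V_{\eta_i}$, $V_{\le i}=V_{\eta_1}\cup\dots\cup V_{\eta_i}$; it is a cpeo if every $v\in V_{\eta_i}$ is simplicial (neighbours form a clique) in $G[V_{\eta_i}\cup\dots\cup V_{\eta_r}]$; $m_{v\to w}(k,h)=|\{u\in V_{\le\min(\pi(v),\pi(w))}: c(v,u)=k, c(u,w)=h\}|$ and $m_{v\leftrightarrow w}(k,h)=m_{v\to w}(k,h)+m_{v\to w}(h,k)$ for $\{v,w\}\in\tilde E$. (M1): $c(v,w)=c(v',w')$ implies $m_{v\leftrightarrow w}=m_{v'\leftrightarrow w'}$. $(G,\mathcal{C})$ is CER if some ordering is a cpeo and satisfies (M1). *)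

(* Defs.v *)
From mathcomp Require Import all_boot all_fingroup.
Set Implicit Arguments. Unset Strict Implicit. Unset Printing Implicit Defensive.

(* Colored graph (G, C) on V = 'I_p (i.e. [p], 0-indexed).
   Colours are 0-indexed naturals: vertex colours are 0..r-1 (vcol : 'I_p -> 'I_r),
   edge colours are r..r+R-1 (ecol v w for an edge {v,w}). *)

Section ColoredGraph.
Variables (p r R : nat) (e : rel 'I_p) (vcol : 'I_p -> 'I_r)
          (ecol : 'I_p -> 'I_p -> nat).

Definition inEt (v w : 'I_p) : bool := (v == w) || e v w.

(* c(v,w); only meaningful when {v,w} in E~.  c(v) = c(v,v). *)
Definition col (v w : 'I_p) : nat := if v == w then nat_of_ord (vcol v) else ecol v w.

Definition is_colored_graph : Prop :=
  [/\ symmetric e, irreflexive e,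
      (forall v w, e v w -> ecol v w = ecol w v),
      (forall v w, e v w -> r <= ecol v w < r + R) &
      ((forall i : 'I_r, exists v, vcol v = i) /\
       (forall k, r <= k < r + R -> exists v w, e v w /\ ecol v w = k))].

(* Ordering (V_{eta_0}, ..., V_{eta_{r-1}}) given by eta : {perm 'I_r};
   pi v = i iff v in V_{eta_i}. *)
Definition pos (eta : {perm 'I_r}) (v : 'I_p) : nat :=
  nat_of_ord ((eta^-1)%g (vcol v)).

Definition simplicial_in (S : pred 'I_p) (v : 'I_p) : Prop :=
  forall u w, S u -> S w -> e v u -> e v w -> u != w -> e u w.

Definition cpeo (eta : {perm 'I_r}) : Prop :=
  forall v, simplicial_in (fun u => pos eta v <= pos eta u) v.

Definition mto (eta : {perm 'I_r}) (v w : 'I_p) (k h : nat) : nat :=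
  #|[set u : 'I_p | [&& pos eta u <= minn (pos eta v) (pos eta w),
                       inEt v u, col v u == k, inEt u w & col u w == h]]|.

Definition mboth (eta : {perm 'I_r}) (v w : 'I_p) (k h : nat) : nat :=
  mto eta v w k h + mto eta v w h k.

Definition M1 (eta : {perm 'I_r}) : Prop :=
  forall v w v' w', inEt v w -> inEt v' w' -> col v w = col v' w' ->
    forall k h, mboth eta v w k h = mboth eta v' w' k h.

Definition CER : Prop := exists eta : {perm 'I_r}, cpeo eta /\ M1 eta.

Definition inF (i : 'I_r) (k : nat) : Prop :=
  exists v w, [/\ inEt v w, vcol v = i, vcol w = i & col v w = k].

End ColoredGraph.

(* Main.v *)
Require Import Defs.
From mathcomp Require Import all_boot all_fingroup.

Lemma card1T p (x : 'I_p) : #|[set u | (u == x) && true]| = 1.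
Proof. have -> : [set u | (u == x) && true] = [set x] by apply/setP => u; rewrite !inE andbT.
by rewrite cards1. Qed.

Section Aux.
Variables (p r R : nat) (e : rel 'I_p) (vcol : 'I_p -> 'I_r)
          (ecol : 'I_p -> 'I_p -> nat).
Hypothesis He : forall v w, e v w -> r <= ecol v w < r + R.

Lemma col_ge (x u : 'I_p) : inEt e x u -> x != u -> r <= col vcol ecol x u.
Proof.
rewrite /inEt /col => /orP[/eqP->|exu]; first by rewrite eqxx.
by move/negbTE => ->; case/andP: (He _ _ exu).
Qed.

Lemma mto1 eta (x y : 'I_p) a k : inEt e x y -> col vcol ecol x y = k -> a < r ->
  mto e vcol ecol eta x y a k = ((nat_of_ord (vcol x) == a) && (pos vcol eta x <= pos vcol eta y)).
Proof.
move=> hxy hk ha; rewrite /mto.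
have -> : [set u | [&& pos vcol eta u <= minn (pos vcol eta x) (pos vcol eta y),
            inEt e x u, col vcol ecol x u == a, inEt e u y & col vcol ecol u y == k]]
   = [set u | (u == x) && ((nat_of_ord (vcol x) == a) && (pos vcol eta x <= pos vcol eta y))].
  apply/setP => u; rewrite !inE.
  case: (eqVneq u x) => [->|ne] /=.
    rewrite leq_min leqnn /inEt eqxx /=; move: hxy hk; rewrite /inEt /col eqxx => -> ->; rewrite !eqxx /= !andbT.
    idtac.
    by rewrite andbC.
  apply/negbTE/negP => /and5P[_ hi /eqP hc _ _].
  have := col_ge _ _ hi; rewrite eq_sym ne => /(_ isT); rewrite hc => hr.
  by have := leq_ltn_trans hr ha; rewrite ltnn.
case: (_ && _) => /=.
  by rewrite card1T.
by apply/eqP; rewrite cards_eq0; apply/eqP/setP => u; rewrite !inE andbF.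
Qed.

Lemma mto2 eta (x y : 'I_p) a k : inEt e x y -> col vcol ecol x y = k -> a < r ->
  (forall u, inEt e u y -> u != y -> r <= col vcol ecol u y) ->
  mto e vcol ecol eta x y k a = ((nat_of_ord (vcol y) == a) && (pos vcol eta y <= pos vcol eta x)).
Proof.
move=> hxy hk ha hcol; rewrite /mto.
have -> : [set u | [&& pos vcol eta u <= minn (pos vcol eta x) (pos vcol eta y),
            inEt e x u, col vcol ecol x u == k, inEt e u y & col vcol ecol u y == a]]
   = [set u | (u == y) && ((nat_of_ord (vcol y) == a) && (pos vcol eta y <= pos vcol eta x))].
  apply/setP => u; rewrite !inE.
  case: (eqVneq u y) => [->|ne] /=.
    rewrite leq_min leqnn /inEt eqxx ?orbT /=; move: hxy hk; rewrite /inEt /col eqxx => -> ->; rewrite !eqxx /= !andbT.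
    by rewrite andbC.
  apply/negbTE/negP => /and5P[_ _ _ hi /eqP hc].
  have := hcol _ hi ne; rewrite hc => hr.
  by have := leq_ltn_trans hr ha; rewrite ltnn.
case: (_ && _) => /=.
  by rewrite card1T.
by apply/eqP; rewrite cards_eq0; apply/eqP/setP => u; rewrite !inE andbF.
Qed.

End Aux.
Arguments col_ge {p r R e vcol ecol} He {x u}.
Arguments mto1 {p r R e vcol ecol} He eta {x y a k}.
Arguments mto2 {p r e vcol ecol} eta {x y a k}.

Theorem lemma7p4 (p r R : nat) (e : rel 'I_p) (vcol : 'I_p -> 'I_r)
    (ecol : 'I_p -> 'I_p -> nat) :
  is_colored_graph R e vcol ecol ->
  CER e vcol ecol ->
  forall (v w : 'I_p) (k : nat) (i : 'I_r),
    inEt e v w -> col vcol ecol v w = k -> inF e vcol ecol i k ->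
    vcol v = i /\ vcol w = i.
Proof.
case=> esy eirr _ He _ [eta [_ hM]] v w k i hvw hk [v' [w' [hvw' hv' hw' hk']]].
have hcol : forall u y, inEt e u y -> u != y -> r <= col vcol ecol u y.
  move=> u y h ne; exact: (col_ge He h ne).
case: (eqVneq v w) => [evw|nvw].
  subst w.
  case: (eqVneq v' w') => [e'|n'].
    subst w'; move: hk hk'; rewrite /col !eqxx => <- hh.
    have : vcol v = i by apply: val_inj; rewrite /= -hh hv'.
    by move=> ->.
  exfalso; have := hcol _ _ hvw' n'; rewrite hk' -hk /col eqxx.
  by rewrite leqNgt ltn_ord.
have hr : r <= k by rewrite -hk; apply: hcol.
case: (eqVneq v' w') => [e'|n'].
  subst w'; exfalso; move: hk'; rewrite /col eqxx => hh.
  by move: hr; rewrite -hh leqNgt ltn_ord.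
have := hM v w v' w' hvw hvw' (etrans hk (esym hk')) (nat_of_ord i) k.
rewrite /mboth (mto1 He eta hvw hk (ltn_ord i)) (mto2 eta hvw hk (ltn_ord i) (fun u => hcol u _)).
rewrite (mto1 He eta hvw' hk' (ltn_ord i)) (mto2 eta hvw' hk' (ltn_ord i) (fun u => hcol u _)).
rewrite hv' hw' /pos hv' hw' !eqxx leqnn /=.
case: (eqVneq (nat_of_ord (vcol v)) (nat_of_ord i)) => h1;
case: (eqVneq (nat_of_ord (vcol w)) (nat_of_ord i)) => h2 //=.
- by move=> _; split; apply: val_inj.
- by case: (_ <= _).
- by case: (_ <= _).
Qed.
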